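(* Let $K$ be a positive semiring and let $H=(V,E)$ be a hypergraph with the local-to-global consistency property for $K$-relations. Then for every $W\subseteq V$, the induced hypergraph $H[W]$ also has the local-to-global consistency property for $K$-relations.
   Context: Every attribute has a nonempty domain $\mathrm{Dom}(A)$. A commutative semiring $(K,+,\cdot,0,1)$ with $0\neq 1$ is positive if $a+b=0$ implies $a=b=0$, and $ab=0$ implies $a=0$ or $b=0$. For a finite set of attributes $X$, $\mathrm{Tup}(X)$ is the set of maps assigning to each $A\in X$ an element of $\mathrm{Dom}(A)$; $t[Y]$ is restriction; $XY=X\cup Y$. A $K$-relation over $X$ is a map $R:\mathrm{Tup}(X)\to K$ with finite support $R'=\{t:R(t)\neq0\}$; its marginal on $Y\subseteq X$ is $R[Y](u)=\sum_{r\in R',r[Y]=u}R(r)$. $R\equiv S$ means $aR=bS$ for nonzero $a,b\in K$. $R$ over $X$ and $S$ over $Y$ are consistent if some $K$-relation $T$ over $XY$ has $R\equiv T[X]$, $S\equiv T[Y]$. A collection $R_1,\dots,R_m$ ($R_i$ over $X_i$) is pairwise consistent if every two members are consistent, and globally consistent if some $K$-relation $T$ over $X_1\cup\cdots\cup X_m$ satisfies $R_i\equiv T[X_i]$ for all $i$. A hypergraph $H=(V,E)$ (finite set $V$ of attributes, hyperedges nonempty subsets of $V$) with hyperedges $X_1,\dots,X_m$ has the local-to-global consistency property for $K$-relations if every pairwise consistent collection of $K$-relations $R_1,\ldots,R_m$ with $R_i$ over $X_i$ is globally consistent. For $W\subseteq V$, $H[W]=(W,\{X\cap W:X\in E\}\setminus\{\emptyset\})$.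 *)

(* Defs.v *)
From HB Require Import structures.
From mathcomp Require Import all_boot all_order all_algebra.
From mathcomp Require Import boolp classical_sets functions cardinality fsbigop.
Set Implicit Arguments. Unset Strict Implicit. Unset Printing Implicit Defensive.
Import Order.TTheory GRing.Theory.
Local Open Scope classical_set_scope.
Local Open Scope ring_scope.

(* A commutative semiring with 0 <> 1 is a [comNzSemiRingType].
   Positivity: a + b = 0 -> a = b = 0, and a * b = 0 -> a = 0 \/ b = 0. *)
Definition positive_semiring (K : comNzSemiRingType) : Prop :=
  (forall a b : K, a + b = 0 -> a = 0 /\ b = 0) /\
  (forall a b : K, a * b = 0 -> a = 0 \/ b = 0).

Section KRelations.
Variables (Attr : Type) (Dom : Attr -> Type) (K : comNzSemiRingType).

(* Equality of tuples is extensional (classical); we equip the type with the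
   classical choice structure so that finitely supported sums make sense. *)
Definition Tup (X : set Attr) : Type := {classic (forall A : Attr, X A -> Dom A)}.

Definition restr (X Y : set Attr) (sYX : Y `<=` X) (t : Tup X) : Tup Y :=
  fun A (hA : Y A) => t A (sYX A hA).

Record krel (X : set Attr) := KRel {
  krel_fun :> Tup X -> K;
  krel_fin : finite_set [set t | krel_fun t != 0] }.

Definition marg (X Y : set Attr) (sYX : Y `<=` X) (R : Tup X -> K) : Tup Y -> K :=
  fun u => \sum_(r \in [set r : Tup X | restr sYX r = u]) R r.

Definition kequiv (X : set Attr) (R S : Tup X -> K) : Prop :=
  exists a b : K, [/\ a != 0, b != 0 & forall t, a * R t = b * S t].

Definition consistent (X Y : set Attr) (R : krel X) (S : krel Y) : Prop :=
  exists T : krel (X `|` Y),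
    kequiv R (marg (@subsetUl _ X Y) T) /\ kequiv S (marg (@subsetUr _ X Y) T).

(* local-to-global consistency property for the hyperedge set E
   (the family of K-relations is indexed by the hyperedges themselves;
   the values of R outside E are irrelevant) *)
Definition local_to_global (E : set (set Attr)) : Prop :=
  forall R : forall X : set Attr, krel X,
    (forall X Y, E X -> E Y -> consistent (R X) (R Y)) ->
    exists T : krel (\bigcup_(X in E) X),
      forall X (hX : E X), kequiv (R X) (marg (bigcup_sup hX) T).

End KRelations.

Definition hypergraph (Attr : Type) (V : set Attr) (E : set (set Attr)) : Prop :=
  [/\ finite_set V, finite_set E & forall X, E X -> X !=set0 /\ X `<=` V].

Definition induced_edges (Attr : Type) (E : set (set Attr)) (W : set Attr)
  : set (set Attr) :=
  [set Y | (exists2 X, E X & Y = X `&` W) /\ Y != set0].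

(* Main.v *)
Require Import Defs.
From HB Require Import structures.
From mathcomp Require Import all_boot all_order all_algebra.
From mathcomp Require Import boolp classical_sets functions cardinality fsbigop.
From mathcomp Require Import finmap.
Set Implicit Arguments. Unset Strict Implicit. Unset Printing Implicit Defensive.
Import Order.TTheory GRing.Theory.
Local Open Scope classical_set_scope.
Local Open Scope ring_scope.

Section Aux.
Variables (Attr : Type) (Dom : Attr -> Type) (K : comNzSemiRingType).
Hypothesis Kpos : positive_semiring K.
Variable c : forall A, Dom A.

Local Notation Tup := (@Tup Attr Dom).
Local Notation restr := (@restr Attr Dom).
Local Notation marg := (@marg Attr Dom K).
Local Notation kequiv := (@kequiv Attr Dom K).

Definition fin X (f : Tup X -> K) := finite_set [set t | f t != 0].

Lemma tupE X (t1 t2 : Tup X) : (forall A hA, t1 A hA = t2 A hA) -> t1 = t2.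
Proof.
move=> h; apply: functional_extensionality_dep => A.
by apply: functional_extensionality_dep => hA; apply: h.
Qed.

Lemma tupPI X (t : Tup X) A (h1 h2 : X A) : t A h1 = t A h2.
Proof. by rewrite (Prop_irrelevance h1 h2). Qed.

Lemma restr_id X (s : X `<=` X) (t : Tup X) : restr s t = t.
Proof. by apply: tupE => A hA; rewrite /restr; apply: tupPI. Qed.

Lemma restr_comp X Y Z (sYX : Y `<=` X) (sZY : Z `<=` Y) (sZX : Z `<=` X) (t : Tup X) :
  restr sZY (restr sYX t) = restr sZX t.
Proof. by apply: tupE => A hA; rewrite /restr; apply: tupPI. Qed.

Lemma marg_pi X Y (s1 s2 : Y `<=` X) (f : Tup X -> K) : marg s1 f = marg s2 f.
Proof. by rewrite (Prop_irrelevance s1 s2). Qed.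

Definition sup X (f : Tup X -> K) : seq (Tup X) := (fset_set [set t | f t != 0] : seq _).

Lemma mem_sup X (f : Tup X -> K) t : fin f -> (t \in sup f) = (f t != 0).
Proof. by move=> hf; rewrite /sup in_fset_set //; apply/idP/idP; [move/set_mem | move=> h; apply/mem_set]. Qed.

Lemma sup_uniq X (f : Tup X -> K) : uniq (sup f).
Proof. exact: fset_uniq. Qed.

Lemma fsum_seq X (f : Tup X -> K) (A : set (Tup X)) s : uniq s ->
  (forall t, f t != 0 -> t \in s) ->
  \sum_(t \in A) f t = \sum_(t <- s | t \in A) f t.
Proof.
move=> us cov.
rewrite (fsbigE [seq t <- s | t \in A]) ?filter_uniq //.
- by rewrite big_filter_cond; apply: eq_bigl => t; rewrite andbb.
- by move=> t /=; rewrite mem_filter => /andP[/set_mem].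
- move=> t At; rewrite mem_filter (mem_set At) /= => tn.
  by apply/eqP; apply: contraNT tn; apply: cov.
Qed.

Lemma margE X Y (s : Y `<=` X) (f : Tup X -> K) (r : seq (Tup X)) u : uniq r ->
  (forall t, f t != 0 -> t \in r) ->
  marg s f u = \sum_(t <- r | restr s t == u) f t.
Proof.
move=> ur cov; rewrite /marg (fsum_seq _ ur cov).
by apply: eq_bigl => t; apply/idP/eqP => [/set_mem //|h]; apply/mem_set.
Qed.


Lemma mulf_neq0P (a b : K) : a != 0 -> b != 0 -> a * b != 0.
Proof.
move=> a0 b0; apply/eqP => /Kpos.2 [] /eqP; by [rewrite (negbTE a0)|rewrite (negbTE b0)].
Qed.

Lemma mulf_eq0P (a b : K) : a != 0 -> a * b = 0 -> b = 0.
Proof. by move=> a0 /Kpos.2 [/eqP|//]; rewrite (negbTE a0). Qed.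

Lemma sum_eq0P (I : eqType) (r : seq I) (P : pred I) (F : I -> K) :
  \sum_(t <- r | P t) F t = 0 -> forall t, t \in r -> P t -> F t = 0.
Proof.
elim: r => [|a r IH] //=; rewrite big_cons.
case: ifP => Pa.
  move=> /Kpos.1 [Fa0 /IH h] t; rewrite inE => /orP[/eqP->|] //; exact: h.
move=> /IH h t; rewrite inE => /orP[/eqP->|]; [by rewrite Pa|exact: h].
Qed.

Lemma fiber (I J : eqType) (s : seq I) (U : seq J) (g : I -> J) (P : pred J)
  (F : I -> K) : uniq U -> (forall t, t \in s -> g t \in U) ->
  \sum_(y <- U | P y) \sum_(t <- s | g t == y) F t = \sum_(t <- s | P (g t)) F t.
Proof.
move=> uU sU.
under eq_bigr do rewrite big_mkcond.
rewrite (exchange_big_dep xpredT) //= [RHS]big_mkcond /=.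
apply: eq_big_seq => t ts.
rewrite big_mkcond (bigD1_seq (g t)) ?sU //= eqxx.
rewrite big1 ?addr0 ?andbT // => y /negbTE ny; rewrite eq_sym ny; by case: (P y).
Qed.


Lemma sup_cov X (f : Tup X -> K) : fin f -> forall t, f t != 0 -> t \in sup f.
Proof. by move=> hf t; rewrite mem_sup. Qed.

Lemma marg_sup X Y (s : Y `<=` X) (f : Tup X -> K) y : fin f ->
  marg s f y != 0 -> y \in map (restr s) (sup f).
Proof.
move=> hf; rewrite (margE s y (sup_uniq f) (sup_cov hf)).
apply: contraNT => hy; rewrite big1_seq // => t /andP[/eqP ey ts].
by move: hy; rewrite -ey map_f.
Qed.

Lemma fin_marg X Y (s : Y `<=` X) (f : Tup X -> K) : fin f -> fin (marg s f).
Proof.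
move=> hf; apply: (@sub_finite_set _ _ (restr s @` [set t | f t != 0])).
  move=> y /=; move=> /(marg_sup hf) /mapP [t ts ey]; exists t; last by rewrite ey.
  by rewrite /= -mem_sup.
exact: finite_image.
Qed.

Lemma marg_comp X Y Z (sYX : Y `<=` X) (sZY : Z `<=` Y) (sZX : Z `<=` X)
  (f : Tup X -> K) : fin f -> marg sZY (marg sYX f) = marg sZX f.
Proof.
move=> hf; apply: functional_extensionality_dep => z.
pose U := undup (map (restr sYX) (sup f)).
have cU : forall y, marg sYX f y != 0 -> y \in U.
  by move=> y /(marg_sup hf); rewrite mem_undup.
rewrite (margE sZY z (undup_uniq _) cU).
under eq_bigr do rewrite (margE sYX _ (sup_uniq f) (sup_cov hf)).
rewrite fiber ?undup_uniq //; last by move=> t ts; rewrite mem_undup map_f.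
rewrite (margE sZX z (sup_uniq f) (sup_cov hf)).
by apply: eq_bigl => t; rewrite restr_comp.
Qed.

Lemma kequiv_marg X Y (s : Y `<=` X) (f g : Tup X -> K) : fin f ->
  kequiv f g -> kequiv (marg s f) (marg s g).
Proof.
move=> hf [a [b [a0 b0 e]]]; exists a, b; split => // u.
have cg : forall t, g t != 0 -> t \in sup f.
  move=> t gt; rewrite mem_sup //; apply/eqP => ft.
  by move: (e t); rewrite ft mulr0 => /esym/(mulf_eq0P b0) /eqP; rewrite (negbTE gt).
rewrite (margE s u (sup_uniq f) (sup_cov hf)) (margE s u (sup_uniq f) cg).
by rewrite !big_distrr /=; apply: eq_bigr => t _; rewrite e.
Qed.


Definition agree D X (t : Tup X) : Prop := forall A (hA : X A), ~ D A -> t A hA = c A.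

Definition merge D U (d : Tup D) : Tup U :=
  fun A (hA : U A) => match pselect (D A) with left h => d A h | right _ => c A end.
Arguments merge {D} U d.

Definition ext D U (sDU : D `<=` U) (R : Tup D -> K) : Tup U -> K :=
  fun t => if `[< agree D t >] then R (restr sDU t) else 0.

Lemma restr_merge D U (sDU : D `<=` U) (d : Tup D) : restr sDU (merge U d) = d.
Proof.
apply: tupE => A hA; rewrite /restr /merge; case: pselect => [h|//].
exact: tupPI.
Qed.

Lemma agree_merge D U (d : Tup D) : agree D (merge U d).
Proof. by move=> A hA nD; rewrite /merge; case: pselect. Qed.

Lemma merge_restr D U (sDU : D `<=` U) (t : Tup U) : agree D t ->
  merge U (restr sDU t) = t.
Proof.
move=> ag; apply: tupE => A hA; rewrite /merge; case: pselect => [h|n].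
  by rewrite /restr; apply: tupPI.
by rewrite ag.
Qed.

Lemma fin_ext D U (sDU : D `<=` U) (R : Tup D -> K) : fin R -> fin (ext sDU R).
Proof.
move=> hR; apply: (@sub_finite_set _ _ (merge U @` [set d | R d != 0])).
  move=> t /=; rewrite /ext; case: asboolP => [ag|]; last by rewrite eqxx.
  by move=> h; exists (restr sDU t) => //; rewrite merge_restr.
exact: finite_image.
Qed.

Lemma kequiv_ext D U (sDU : D `<=` U) (R S : Tup D -> K) :
  kequiv R S -> kequiv (ext sDU R) (ext sDU S).
Proof.
move=> [a [b [a0 b0 e]]]; exists a, b; split => // t; rewrite /ext.
by case: asboolP => _; rewrite ?mulr0.
Qed.

Lemma ext_id Z (s : Z `<=` Z) (R : Tup Z -> K) : ext s R = R.
Proof.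
apply: functional_extensionality_dep => t; rewrite /ext asboolT ?restr_id //; by move=> A hA.

Qed.

Lemma marg_id Z (s : Z `<=` Z) (R : Tup Z -> K) : marg s R = R.
Proof.
apply: functional_extensionality_dep => u; rewrite /marg.
have -> : [set r : Tup Z | restr s r = u] = [set u].
  by apply/seteqP; split => r /=; rewrite restr_id.
by rewrite fsbig_set1.
Qed.


Lemma marg_ext U D X Z (sDU : D `<=` U) (sXU : X `<=` U) (sZX : Z `<=` X)
  (sZD : Z `<=` D) (hZ : X `&` D `<=` Z) (T : Tup D -> K) : fin T ->
  marg sXU (ext sDU T) = ext sZX (marg sZD T).
Proof.
move=> hT; apply: functional_extensionality_dep => x.
have cov : forall t, ext sDU T t != 0 -> t \in map (merge U) (sup T).
  move=> t; rewrite /ext; case: asboolP => [ag|]; last by rewrite eqxx.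
  by move=> h; rewrite -(merge_restr sDU ag) map_f // mem_sup.
have um : uniq (map (merge U) (sup T)).
  rewrite map_inj_uniq ?sup_uniq // => d1 d2 e.
  by have h := congr1 (restr sDU) e; rewrite !restr_merge in h.
rewrite (margE sXU x um cov) big_map.
have ex : forall d, ext sDU T (merge U d) = T d.
  by move=> d; rewrite /ext asboolT ?restr_merge //; apply: agree_merge.
under eq_bigr do rewrite ex.
rewrite /ext; case: asboolP => [ag|nag].
  rewrite (margE sZD _ (sup_uniq T) (sup_cov hT)); apply: eq_bigl => d.
  apply/eqP/eqP => e.
    apply: tupE => A hA; rewrite /restr -e /restr /merge.
    case: pselect => [h|n]; first exact: tupPI.
    by exfalso; apply: n; apply: sZD.
  apply: tupE => A hA; rewrite /restr /merge; case: pselect => [h|n].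
    have hz : Z A := hZ _ (conj hA h).
    transitivity (@restr _ _ sZD d A hz); first by rewrite /restr; exact: tupPI.
    by rewrite e /restr; exact: tupPI.
  by rewrite ag // => zA; exact: n (sZD _ zA).
rewrite big1_seq // => d /andP[/eqP e _]; exfalso; apply: nag => A hA nZ.
rewrite -e /restr /merge; case: pselect => [h|//].
by exfalso; apply: nZ; apply: hZ.
Qed.


Lemma ext_merge D U (sDU : D `<=` U) (T : Tup D -> K) d : ext sDU T (merge U d) = T d.
Proof. by rewrite /ext asboolT ?restr_merge //; apply: agree_merge. Qed.

Definition pt Z : Tup Z := fun A (_ : Z A) => c A.
Arguments pt Z : clear implicits.
Definition one Z (t : Tup Z) : K := if t == pt Z then 1 else 0.
Lemma pt_def Z : one (pt Z) = 1. Proof. by rewrite /one eqxx. Qed.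

Lemma fin_one Z : fin (@one Z).
Proof.
apply: (@sub_finite_set _ _ [set pt Z]); last exact: finite_set1.
move=> t /=; rewrite /one; case: (t =P pt Z) => [->|]; [by [] | by rewrite eqxx].
Qed.

Lemma tup_empty Z : Z = set0 -> forall t : Tup Z, t = pt Z.
Proof. by move=> eZ t; apply: tupE => A hA; exfalso; rewrite eZ in hA. Qed.

Lemma sum_neq0 X (f : Tup X -> K) (A : set (Tup X)) t0 : fin f -> A t0 ->
  f t0 != 0 -> \sum_(t \in A) f t != 0.
Proof.
move=> hf At0 ft0; rewrite (fsum_seq _ (sup_uniq f) (sup_cov hf)).
apply/eqP => /sum_eq0P h.
have : f t0 = 0 by apply: h; [rewrite mem_sup | exact: mem_set].
by move/eqP: ft0.
Qed.

Lemma kequiv_refl X (f : Tup X -> K) : kequiv f f.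
Proof. by exists 1, 1; split => //; apply: oner_neq0. Qed.

Lemma empty_consist U Z1 Z2 (s2 : Z2 `<=` U) (s1 : Z1 `<=` U) (e1 : Z1 = set0)
  (S : Tup Z2 -> K) t0 : fin S -> S t0 != 0 ->
  kequiv S (marg s2 (ext s2 S)) /\ kequiv (@one Z1) (marg s1 (ext s2 S)).
Proof.
move=> hS St0; split.
  have sZZ : Z2 `<=` Z2 by [].
  have hZ : Z2 `&` Z2 `<=` Z2 by move=> A [].
  rewrite (marg_ext s2 s2 sZZ sZZ hZ hS) ext_id marg_id; exact: kequiv_refl.
exists (marg s1 (ext s2 S) (pt Z1)), 1; split.
- rewrite /marg; apply: (@sum_neq0 _ _ _ (merge U t0)).
  + exact: fin_ext.
  + by rewrite /= (tup_empty e1 (restr _ _)).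
  + by rewrite ext_merge.
- exact: oner_neq0.
- move=> t; rewrite (tup_empty e1 t) /one eqxx mulr1 mul1r //.
Qed.

Lemma zero_consist X Y (R : krel Dom K X) (S : krel Dom K Y) :
  consistent R S -> (forall t, R t = 0) -> forall t, S t = 0.
Proof.
move=> [T [[a [b [a0 b0 e1]]] [a' [b' [a'0 b'0 e2]]]]] R0.
have m0 : forall u, marg (@subsetUl _ X Y) T u = 0.
  by move=> u; apply: (mulf_eq0P b0); rewrite -e1 R0 mulr0.
have T0 : forall t, T t = 0.
  move=> t; apply/eqP; apply: contraT => Tt.
  have := @sum_neq0 _ T [set r | restr (@subsetUl _ X Y) r = restr (@subsetUl _ X Y) t] t (krel_fin T) erefl Tt.
  by rewrite -/(marg _ _ _) m0 eqxx.
move=> t; apply: (mulf_eq0P a'0); rewrite e2 /marg fsbig1 ?mulr0 // => r _.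
Qed.

End Aux.

Definition sIl (Attr : Type) (X W : set Attr) : X `&` W `<=` X := fun A h => proj1 h.
Arguments sIl {Attr} X W [t] _.


Unset Implicit Arguments.
Theorem lemma15 (K : comNzSemiRingType) (Attr : Type) (Dom : Attr -> Type)
    (HDom : forall A : Attr, inhabited (Dom A))
    (V : set Attr) (E : set (set Attr)) :
  positive_semiring K ->
  hypergraph V E ->
  local_to_global Dom K E ->
  forall W : set Attr, W `<=` V ->
    local_to_global Dom K (induced_edges E W).
Proof.
move=> Kpos _ L2G W _ R HR.
have hex : forall A, exists x : Dom A, True.
  by move=> A; case: (HDom A) => x; exists x.
have c : forall A, Dom A := fun A => projT1 (cid (hex A)).
case: (pselect (exists Z, induced_edges E W Z /\ forall t, R Z t = 0)).
  move=> [Z [EZ R0]].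
  have zero : forall Y, induced_edges E W Y -> forall t, R Y t = 0.
    by move=> Y hY; apply: (zero_consist Kpos (HR Z Y EZ hY) R0).
  have fin0 : finite_set [set t : Tup Dom (\bigcup_(X in induced_edges E W) X) | (0 : K) != 0].
    by apply: (sub_finite_set _ (finite_set0 _)) => t /=; rewrite eqxx.
  exists (KRel fin0) => Y hY; exists 1, 1; split; try exact: oner_neq0.
  by move=> t; rewrite zero // /marg fsbig1.
move=> nex.
have nz : forall Z, induced_edges E W Z -> exists t, R Z t != 0.
  move=> Z hZ; case: (pselect (exists t, R Z t != 0)) => // hn.
  exfalso; apply: nex; exists Z; split => // t.
  case: (R Z t =P 0) => // h; exfalso; apply: hn; exists t; exact/eqP.
pose Q := fun Z => if pselect (Z = set0) then KRel (fin_one K c Z) else R Z.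
have EW : forall X, E X -> ~ X `&` W = set0 -> induced_edges E W (X `&` W).
  by move=> X hX hn; split; [exists X | apply/eqP].
have C : forall X Y, E X -> E Y -> consistent (Q (X `&` W)) (Q (Y `&` W)).
  move=> X Y hX hY; rewrite /Q.
  case: pselect => [eX|nX]; case: pselect => [eY|nY].
  - have o1 : one K c (@pt _ _ c (Y `&` W)) != 0 by rewrite pt_def oner_neq0.
    have [k1 k2] := empty_consist Kpos c (@subsetUr _ (X `&` W) _) (@subsetUl _ _ (Y `&` W)) eX (fin_one K c _) o1.
    by exists (KRel (fin_ext c (@subsetUr _ (X `&` W) _) (fin_one K c (Y `&` W)))).
  - have [t0 t0n] := nz _ (EW Y hY nY).
    have [k1 k2] := empty_consist Kpos c (@subsetUr _ (X `&` W) _) (@subsetUl _ _ (Y `&` W)) eX (krel_fin _) t0n.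
    by exists (KRel (fin_ext c (@subsetUr _ (X `&` W) _) (krel_fin (R (Y `&` W))))).
  - have [t0 t0n] := nz _ (EW X hX nX).
    have [k1 k2] := empty_consist Kpos c (@subsetUl _ _ (Y `&` W)) (@subsetUr _ (X `&` W) _) eY (krel_fin _) t0n.
    by exists (KRel (fin_ext c (@subsetUl _ _ (Y `&` W)) (krel_fin (R (X `&` W))))).
  - exact: HR (EW X hX nX) (EW Y hY nY).
pose R' := fun X => KRel (fin_ext c (sIl X W) (krel_fin (Q (X `&` W)))).
have HR' : forall X Y, E X -> E Y -> consistent (R' X) (R' Y).
  move=> X Y hX hY; have [T [k1 k2]] := C X Y hX hY.
  have sDU : (X `&` W) `|` (Y `&` W) `<=` X `|` Y.
    by move=> A [[h _]|[h _]]; [left|right].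
  exists (KRel (fin_ext c sDU (krel_fin T))); split => /=.
    have hZ : X `&` ((X `&` W) `|` (Y `&` W)) `<=` X `&` W.
      by move=> A [hx [[_ hw]|[_ hw]]]; split.
    rewrite (marg_ext c sDU (@subsetUl _ X Y) (sIl X W) (@subsetUl _ _ (Y `&` W)) hZ (krel_fin T)).
    exact: kequiv_ext.
  have hZ : Y `&` ((X `&` W) `|` (Y `&` W)) `<=` Y `&` W.
    by move=> A [hx [[_ hw]|[_ hw]]]; split.
  rewrite (marg_ext c sDU (@subsetUr _ X Y) (sIl Y W) (@subsetUr _ (X `&` W) _) hZ (krel_fin T)).
  exact: kequiv_ext.
have [T HT] := L2G R' HR'.
have sU : \bigcup_(Y in induced_edges E W) Y `<=` \bigcup_(X in E) X.
  by move=> A [Y [[X hX eY] _] hA]; exists X => //; rewrite eY in hA; case: hA.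
exists (KRel (fin_marg sU (krel_fin T))) => Y hY /=.
move: (bigcup_sup hY) => p.
have [[X hX eY] hne] := hY; clear hY; subst Y.
have sZX : X `&` W `<=` \bigcup_(X in E) X by move=> A h; exact: sU A (p A h).
rewrite (marg_comp sU p sZX (krel_fin T)).
rewrite -(marg_comp (bigcup_sup hX) (sIl X W) sZX (krel_fin T)).
have := kequiv_marg Kpos (sIl X W) (krel_fin (R' X)) (HT X hX).
have sZZ : X `&` W `<=` X `&` W by [].
have hZ : X `&` W `&` (X `&` W) `<=` X `&` W by move=> A [].
rewrite /= (marg_ext c (sIl X W) (sIl X W) sZZ sZZ hZ (krel_fin _)) ext_id marg_id.
rewrite /Q; case: pselect => // e; exfalso; move: hne; by rewrite e eqxx.
Qed.
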